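(* Let $Q$ be a prime quiver with $\chi(Q)\ge2$ such that $(Q,0)$ is tight. (i) For every vertex $v\in Q_0$ we have $|\{a\in Q_1\mid a^-=v\}|\ge2$ and $|\{a\in Q_1\mid a^+=v\}|\ge2$. (ii) $|Q_0|\le\chi(Q)-1$, and consequently $|Q_1|=|Q_0|+\chi(Q)-1\le2(\chi(Q)-1)$.
   Context: A quiver $Q$: vertices $Q_0$, arrows $Q_1$, $a$ from $a^-$ to $a^+$ (loops, multiple arrows, oriented cycles allowed). $\chi(Q)=|Q_1|-|Q_0|+(\text{number of connected components of the underlying graph})$. $Q$ is prime if its underlying graph is connected, has at least one edge, and is not the union of two full proper subgraphs having exactly one common vertex. For $\theta\in\mathbb{Z}^{Q_0}$, $\nabla(Q,\theta)=\{x\in\mathbb{R}_{\ge0}^{Q_1}\mid\forall v:\ \theta(v)=\sum_{a^+=v}x(a)-\sum_{a^-=v}x(a)\}$. Integral-affine equivalence of lattice polyhedra: an affine isomorphism of affine spans mapping lattice points of the span onto lattice points of the span and the polyhedron onto the polyhedron. An arrow $a$ is removable if $\nabla(Q,\theta)$ is integral-affinely equivalent to $\nabla(Q',\theta)$, $Q'$ being $Q$ with $a$ deleted; contracting a non-loop arrow $a$ gives $(\hat Q,\hat\theta)$ (delete $a$, glue $a^\pm$ into one vertex $v$, $\hat\theta(v)=\theta(a^-)+\theta(a^+)$, $\hat\theta=\theta$ elsewhere), and $a$ is contractable if $\nabla(Q,\theta)$ is integral-affinely equivalent to $\nabla(\hat Q,\hat\theta)$. $(Q,\theta)$ is tight if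 no arrow is removable or contractable. *)

(* Defs.v *)
From HB Require Import structures.
From mathcomp Require Import all_boot all_order all_algebra.
From mathcomp Require Import reals.

Set Implicit Arguments.
Unset Strict Implicit.
Unset Printing Implicit Defensive.

Import Order.TTheory GRing.Theory Num.Theory.
Local Open Scope ring_scope.

(** A finite quiver: vertices Q0, arrows Q1, arrow a goes from src a = a^- to tgt a = a^+.
    Loops, multiple arrows and oriented cycles are allowed. *)
Record quiver := Quiver {
  vert : finType;
  arr : finType;
  src : arr -> vert;
  tgt : arr -> vert }.

Definition uadj (Q : quiver) : rel (vert Q) :=
  fun u v => [exists a : arr Q, ((src a == u) && (tgt a == v)) || ((src a == v) && (tgt a == u))].

Arguments uadj : clear implicits.

Definition ncomp (Q : quiver) : nat := n_comp (uadj Q) predT.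

Definition chi (Q : quiver) : int :=
  (#|arr Q|%:Z - #|vert Q|%:Z + (ncomp Q)%:Z)%R.

(** A full subgraph
    is determined by its vertex set S (it contains all arrows with both ends in S). *)
Definition prime_quiver (Q : quiver) : Prop :=
  (forall u v : vert Q, connect (uadj Q) u v) /\
  (0 < #|arr Q|)%N /\
  ~ (exists S1 S2 : {set vert Q},
        [/\ S1 != setT, S2 != setT, S1 :|: S2 = setT,
            #|S1 :&: S2| = 1%N &
            forall a : arr Q, (src a \in S1) && (tgt a \in S1) || (src a \in S2) && (tgt a \in S2)]).

Definition nabla (R : realType) (Q : quiver) (theta : vert Q -> int) (x : arr Q -> R) : Prop :=
  (forall a, 0 <= x a) /\
  (forall v : vert Q, (theta v)%:~R = \sum_(a | tgt a == v) x a - \sum_(a | src a == v) x a).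

Definition affine_comb (R : realType) (I : Type) (n : nat) (lam : 'I_n -> R)
  (p : 'I_n -> I -> R) : I -> R := fun k => \sum_(i < n) lam i * p i k.

Definition aff_hull (R : realType) (I : Type) (P : (I -> R) -> Prop) (x : I -> R) : Prop :=
  exists n (lam : 'I_n -> R) (p : 'I_n -> I -> R),
    [/\ forall i, P (p i), \sum_(i < n) lam i = 1 & x = affine_comb lam p].

Definition lattice_pt (R : realType) (I : Type) (x : I -> R) : Prop :=
  exists z : I -> int, forall k, x k = (z k)%:~R.

Definition int_aff_equiv (R : realType) (I J : Type)
  (P : (I -> R) -> Prop) (P' : (J -> R) -> Prop) : Prop :=
  exists f : (I -> R) -> (J -> R),
    [/\
        (forall n (lam : 'I_n -> R) (p : 'I_n -> I -> R),
            (forall i, aff_hull P (p i)) -> \sum_(i < n) lam i = 1 ->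
            f (affine_comb lam p) = affine_comb lam (fun i => f (p i))),
        (forall x, aff_hull P x -> aff_hull P' (f x)),
        (forall x y, aff_hull P x -> aff_hull P y -> f x = f y -> x = y),
        (forall y, aff_hull P' y -> exists2 x, aff_hull P x & f x = y) &
        (forall x, aff_hull P x -> (lattice_pt x <-> lattice_pt (f x)))] /\
        (forall x, aff_hull P x -> (P x <-> P' (f x))).

Definition del_arr (Q : quiver) (a : arr Q) : quiver :=
  @Quiver (vert Q) {b : arr Q | b != a}
          (fun b => src (val b)) (fun b => tgt (val b)).

(** Contracting a non-loop arrow a: delete a and glue tgt a into src a.
    The new vertex set is Q0 \ {a^+}; the glued vertex is represented by a^-. *)
Section Contract.
Variables (Q : quiver) (a : arr Q) (H : src a != tgt a).

Definition cvert := {v : vert Q | v != tgt a}.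
Definition glue_pt : cvert := exist _ (src a) H.
Definition glue (v : vert Q) : cvert := insubd glue_pt v.

Definition contr_arr : quiver :=
  @Quiver cvert {b : arr Q | b != a}
          (fun b => glue (src (val b))) (fun b => glue (tgt (val b))).

Definition contr_theta (theta : vert Q -> int) (w : cvert) : int :=
  if val w == src a then (theta (src a) + theta (tgt a))%R else theta (val w).
End Contract.

Definition removable (R : realType) (Q : quiver) (theta : vert Q -> int) (a : arr Q) : Prop :=
  int_aff_equiv (@nabla R Q theta) (@nabla R (del_arr a) theta).

Definition contractable (R : realType) (Q : quiver) (theta : vert Q -> int) (a : arr Q) : Prop :=
  exists H : src a != tgt a,
    int_aff_equiv (@nabla R Q theta) (@nabla R (contr_arr H) (@contr_theta Q a theta)).

Definition tight (R : realType) (Q : quiver) (theta : vert Q -> int) : Prop :=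
  forall a : arr Q, ~ removable R theta a /\ ~ contractable R theta a.

(* Main.v *)
Require Import Defs.
From HB Require Import structures.
From mathcomp Require Import all_boot all_order all_algebra.
From mathcomp Require Import reals lra zify.
From Stdlib Require Import FunctionalExtensionality.
Import Order.TTheory GRing.Theory Num.Theory.
Local Open Scope ring_scope.
Set Implicit Arguments. Unset Strict Implicit.

Section Aux.
Variable R : realType.

Lemma sum_sig (T : finType) (a : T) (P : pred T) (x : T -> R) :
  \sum_(b | P b) x b =
  \sum_(c : {b : T | b != a} | P (val c)) x (val c) + (if P a then x a else 0).
Proof.
rewrite (bigID (fun b => b == a)) /= addrC; congr (_ + _).
  rewrite (reindex_omap (val : {b : T | b != a} -> T) insub); last first.
    by move=> i /andP[_ ia]; rewrite insubT.
  by apply: eq_bigl=> -[i ia]/=; rewrite insubT /= ia eqxx !andbT.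
case: ifP => Pa.
  by apply: big_pred1 => b /=; case: eqP => [->|]; rewrite ?Pa ?andbF.
by apply: big_pred0 => b; case: eqP => [->|]; rewrite ?Pa ?andbF.
Qed.

Lemma equiv_of_maps (I J : Type) (P : (I -> R) -> Prop) (P' : (J -> R) -> Prop)
  (f : (I -> R) -> (J -> R)) (g : (J -> R) -> (I -> R)) :
  (forall n (lam : 'I_n -> R) p, f (affine_comb lam p) = affine_comb lam (fun i => f (p i))) ->
  (forall n (lam : 'I_n -> R) p, g (affine_comb lam p) = affine_comb lam (fun i => g (p i))) ->
  (forall x, P x -> P' (f x)) -> (forall y, P' y -> P (g y)) ->
  (forall x, P x -> g (f x) = x) -> (forall y, P' y -> f (g y) = y) ->
  (forall x, lattice_pt x -> lattice_pt (f x)) ->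
  (forall y, lattice_pt y -> lattice_pt (g y)) ->
  int_aff_equiv P P'.
Proof.
move=> fl gl fP gP gf fg fL gL.
have gfA : forall x, aff_hull P x -> g (f x) = x.
  move=> x [n [lam [p [Pp _ ->]]]]; rewrite fl gl.
  by congr affine_comb; apply: functional_extensionality_dep => i; rewrite gf.
have fgA : forall y, aff_hull P' y -> f (g y) = y.
  move=> x [n [lam [p [Pp _ ->]]]]; rewrite gl fl.
  by congr affine_comb; apply: functional_extensionality_dep => i; rewrite fg.
exists f; split; first split.
- by move=> n lam p _ _; rewrite fl.
- move=> x [n [lam [p [Pp s1 ->]]]]; rewrite fl.
  by exists n, lam, (fun i => f (p i)); split=> // i; apply: fP.
- by move=> x y hx hy fxy; rewrite -(gfA x hx) -(gfA y hy) fxy.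
- move=> y hy; exists (g y); last exact: fgA.
  move: hy => [n [lam [p [Pp s1 ->]]]]; rewrite gl.
  by exists n, lam, (fun i => g (p i)); split=> // i; apply: gP.
- move=> x hx; split; first exact: fL.
  by move=> /gL; rewrite gfA.
- move=> x hx; split; first exact: fP.
  by move=> /gP; rewrite gfA.
Qed.

Lemma removable_of_zero (Q : quiver) (theta : vert Q -> int) (b : arr Q) :
  (forall x : arr Q -> R, nabla theta x -> x b = 0) -> removable R theta b.
Proof.
move=> Z.
pose f := fun (x : arr Q -> R) (c : arr (del_arr b)) => x (val c).
pose g := fun (y : arr (del_arr b) -> R) (c : arr Q) =>
  oapp y 0 (@insub _ (fun c => c != b) _ c).
apply: (@equiv_of_maps _ _ _ _ f g).
- by [].
- move=> n lam p; apply: functional_extensionality_dep => c.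
  rewrite /g /affine_comb; case: (insub c) => //= .
  by rewrite big1 // => i _; rewrite mulr0.
- move=> x [x0 cx]; split => [c|v]; first exact: x0.
  have := cx v; rewrite (sum_sig b (fun a => tgt a == v)).
  rewrite (sum_sig b (fun a => src a == v)) (Z x) ?if_same ?addr0 //.
- move=> y [y0 cy]; split => [c|v].
    by rewrite /g; case: (insub c) => //=.
  rewrite (sum_sig b (fun a => tgt a == v)) (sum_sig b (fun a => src a == v)).
  rewrite /g insubF ?eqxx //= !if_same !addr0 cy.
  by congr (_ - _); apply: eq_bigr => c _; rewrite valK.
- move=> x hx; apply: functional_extensionality_dep => c.
  rewrite /g /f; case: insubP => [c' _ <- //| /negPn/eqP ->].
  by rewrite (Z x hx).
- move=> y _; apply: functional_extensionality_dep => c.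
  by rewrite /g /f valK.
- by move=> x [z hz]; exists (fun c => z (val c)) => c; rewrite /f hz.
- move=> y [z hz]; exists (fun c => oapp z 0%:Z (@insub _ (fun c => c != b) _ c)) => c.
  by rewrite /g; case: (insub c) => //=.
Qed.

Definition net (Q : quiver) (x : arr Q -> R) (u : vert Q) :=
  \sum_(b | tgt b == u) x b - \sum_(b | src b == u) x b.

Lemma val_glue (Q : quiver) (a : arr Q) (H : src a != tgt a) (u : vert Q) :
  val (glue H u) = if u == tgt a then src a else u.
Proof.
rewrite /glue /insubd; case: insubP => [u' hu ->|/negPn/eqP->]; last by rewrite eqxx.
by move: hu => /= /negPf ->.
Qed.

Lemma net_contr (Q : quiver) (a : arr Q) (H : src a != tgt a) (x : arr Q -> R)
  (w : cvert a) :
  \sum_(c : arr (contr_arr H) | tgt c == w) x (val c) -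
  \sum_(c : arr (contr_arr H) | src c == w) x (val c) =
  \sum_(u | glue H u == w) net x u.
Proof.
have gst : glue H (tgt a) = glue H (src a).
  by apply: val_inj; rewrite !val_glue eqxx (negPf H).
have e1 := sum_sig a (fun b => glue H (tgt b) == w) x.
have e2 := sum_sig a (fun b => glue H (src b) == w) x.
rewrite /= gst in e1 e2.
have -> : \sum_(c : arr (contr_arr H) | tgt c == w) x (val c) =
   \sum_(b | glue H (tgt b) == w) x b - (if glue H (src a) == w then x a else 0).
  by rewrite e1 addrK.
have -> : \sum_(c : arr (contr_arr H) | src c == w) x (val c) =
   \sum_(b | glue H (src b) == w) x b - (if glue H (src a) == w then x a else 0).
  by rewrite e2 addrK.
rewrite opprB addrA subrK /net sumrB.
rewrite (partition_big (fun b => tgt b) (fun u => glue H u == w)) //=.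
rewrite [X in _ - X](partition_big (fun b => src b) (fun u => glue H u == w)) //=.
congr (_ - _); apply: eq_bigr => u hu; apply: eq_bigl => b.
  by case: (tgt b =P u) => [->|]; rewrite ?hu ?andbF.
by case: (src b =P u) => [->|]; rewrite ?hu ?andbF.
Qed.

Lemma contr_theta0 (Q : quiver) (a : arr Q) (H : src a != tgt a) (w : cvert a) :
  (contr_theta (fun _ : vert Q => 0%:Z) w)%:~R = 0 :> R.
Proof. by rewrite /contr_theta; case: ifP. Qed.

Lemma contractable_of (Q : quiver) (a : arr Q) (H : src a != tgt a) (p : pred (arr Q)) :
  p a = false ->
  (forall x : arr Q -> R, nabla (fun _ => 0%:Z) x -> x a = \sum_(b | p b) x b) ->
  (forall x : arr Q -> R, x a = \sum_(b | p b) x b ->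
      net x (src a) + net x (tgt a) = 0 -> net x (src a) = 0) ->
  contractable R (fun _ : vert Q => 0%:Z) a.
Proof.
move=> pa C1 C2; exists H.
pose f := fun (x : arr Q -> R) (c : arr (contr_arr H)) => x (val c).
pose g := fun (y : arr (contr_arr H) -> R) (c : arr Q) =>
  oapp y (\sum_(d : arr (contr_arr H) | p (val d)) y d)
       (@insub _ (fun c => c != a) _ c).
have gval : forall y (c : arr (contr_arr H)), g y (val c) = y c.
  by move=> y c; rewrite /g valK.
have gsum : forall y, \sum_(b | p b) g y b = g y a.
  move=> y; rewrite (sum_sig a p) pa addr0 /g insubF ?eqxx //=.
  by apply: eq_bigr => c _; rewrite valK.
apply: (@equiv_of_maps _ _ _ _ f g).
- by [].
- move=> n lam q; apply: functional_extensionality_dep => c.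
  rewrite /g /affine_comb; case: (insub c) => //= .
  rewrite exchange_big /=; apply: eq_bigr => i _.
  by rewrite mulr_sumr.
- move=> x [x0 cx]; split => [c|w]; first exact: x0.
  have e : \sum_(u | glue H u == w) net x u = 0.
    by apply: big1 => u _; rewrite /net -cx.
  rewrite (contr_theta0 H); have e2 := eq_trans (net_contr H x w) e. symmetry. exact e2.
- move=> y [y0 cy]; split => [c|v].
    rewrite /g; case: (insub c) => //= ; exact: sumr_ge0.
  have hw : forall w : cvert a, \sum_(u | glue H u == w) net (g y) u = 0.
    move=> w; have cw := cy w; rewrite (contr_theta0 H) in cw.
    have sg : forall P : pred (arr (contr_arr H)), \sum_(c | P c) g y (val c) = \sum_(c | P c) y c.
      by move=> P; apply: eq_bigr => c _; exact: gval.
    by rewrite -(net_contr H) !sg -cw.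
  have hpt : net (g y) (src a) + net (g y) (tgt a) = 0.
    rewrite -(hw (glue_pt H)) (bigD1 (src a)) /=; last first.
      by apply/eqP/val_inj; rewrite val_glue (negPf H).
    rewrite (bigD1 (tgt a)) /=; last first.
      apply/andP; split; last by rewrite eq_sym. by apply/eqP/val_inj; rewrite val_glue eqxx.
    rewrite big_pred0 ?addr0 // => u.
    case: eqP => // /(congr1 val); rewrite val_glue /=.
    by case: (u =P tgt a) => [->|_ ->]; rewrite ?eqxx ?andbF.
  have hs := C2 _ (esym (gsum y)) hpt.
  have ht : net (g y) (tgt a) = 0 by move: hpt; rewrite hs add0r.
  have : net (g y) v = 0.
    have [->//|vs] := eqVneq v (src a).
    have [->//|vt] := eqVneq v (tgt a).
    have hv : val (glue H v) = v by rewrite val_glue (negPf vt).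
    rewrite -(hw (glue H v)) (big_pred1 v) // => u /=.
    apply/eqP/eqP => [/(congr1 val)|->//]; rewrite hv val_glue.
    by case: ifP => // _ e; rewrite e eqxx in vs.
  by rewrite /net => ->.
- move=> x hx; apply: functional_extensionality_dep => c.
  rewrite /g /f; case: insubP => [c' _ <- //| /negPn/eqP ->].
  rewrite (C1 x hx) (sum_sig a p) pa addr0.
  by apply: eq_bigr.
- move=> y _; apply: functional_extensionality_dep => c.
  by rewrite /f gval.
- by move=> x [z hz]; exists (fun c => z (val c)) => c; rewrite /f hz.
- move=> y [z hz].
  exists (fun c => oapp z (\sum_(d : arr (contr_arr H) | p (val d)) z d)
       (@insub _ (fun c => c != a) _ c)) => c.
  rewrite /g; case: (insub c) => //=.
  by rewrite rmorph_sum; apply: eq_bigr.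
Qed.
End Aux.

Lemma ncomp1 (Q : quiver) (v : vert Q) :
  (forall u w : vert Q, connect (uadj Q) u w) -> ncomp Q = 1%N.
Proof.
move=> hc; rewrite /ncomp.
have sym : connect_sym (uadj Q) by move=> x y; rewrite !hc.
rewrite (@eq_n_comp_r _ _ predT (connect (uadj Q) v)) ?n_comp_connect //.
by move=> x; rewrite !inE hc.
Qed.

Lemma isolated (Q : quiver) (v : vert Q) :
  (forall x, uadj Q v x -> x = v) ->
  (forall u w : vert Q, connect (uadj Q) u w) -> forall u, u = v.
Proof.
move=> hi hc u; have /connectP [p pth ->] := hc v u.
elim: p pth => //= z p IH /andP [/hi -> ]; exact: IH.
Qed.

Lemma net0 (R : realType) (Q : quiver) (x : arr Q -> R) v :
  nabla (fun _ => 0%:Z) x ->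
  \sum_(b | tgt b == v) x b = \sum_(b | src b == v) x b.
Proof. by move=> [_ /(_ v) /esym /eqP]; rewrite subr_eq0 => /eqP. Qed.

Lemma chi1 (Q : quiver) (v : vert Q) (a : arr Q) :
  (forall u, u = v) -> (forall b, b = a) ->
  (forall u w : vert Q, connect (uadj Q) u w) -> chi Q = 1.
Proof.
move=> hv ha hc; rewrite /chi (ncomp1 v hc).
have -> : #|vert Q| = 1%N by apply: (@eq_card1 _ v) => u; rewrite !inE (hv u) eqxx.
have -> : #|arr Q| = 1%N by apply: (@eq_card1 _ a) => u; rewrite !inE (ha u) eqxx.
by [].
Qed.

Lemma out_deg (R : realType) (Q : quiver) :
  prime_quiver Q -> 2%:Z <= chi Q -> tight R (fun _ : vert Q => 0%:Z) ->
  forall v, (2 <= #|[set a : arr Q | src a == v]|)%N.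
Proof.
move=> [hc [har _]] hchi ht v.
have hrem : forall b, ~ removable R (fun _ : vert Q => 0%:Z) b by move=> b; case: (ht b).
have hcon : forall b, ~ contractable R (fun _ : vert Q => 0%:Z) b by move=> b; case: (ht b).
have /card_gt0P [a0 _] := har.
rewrite leqNgt; apply/negP; rewrite ltnS leq_eqVlt ltnS leqn0.
case/orP => [/cards1P [a ha] | /eqP /cards0_eq h0].
- have hs : forall b, (src b == v) = (b == a).
    by move=> b; have := congr1 (fun S : {set arr Q} => b \in S) ha; rewrite !inE.
  have hsum : forall x : arr Q -> R, \sum_(b | src b == v) x b = x a.
    by move=> x; rewrite (big_pred1 a) // => b; rewrite /= hs.
  have sa : src a = v by apply/eqP; rewrite hs.
  case: (eqVneq (tgt a) v) => [ta|ta].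
  + case: (pickP (fun b => (tgt b == v) && (b != a))) => [b hb | hnb].
      apply: (hrem b); apply: removable_of_zero => x hx.
      have := net0 v hx; rewrite hsum (bigD1 a) /= ?ta ?eqxx // => e.
      have e2 : \sum_(i | (tgt i == v) && (i != a)) x i = 0 by lra.
      by apply: (psumr_eq0P _ e2) => // i _; case: hx.
    have hall : forall u, u = v.
      apply: isolated hc => y /existsP [b /orP [] /andP [/eqP h1 /eqP h2]].
        by move: h1; move/eqP; rewrite hs => /eqP eb; rewrite -h2 eb.
      case: (eqVneq b a) => [eb|nb]; first by rewrite -h1 eb.
      by have := hnb b; rewrite /= h2 eqxx nb.
    have ha' : forall b, b = a by move=> b; apply/eqP; rewrite -hs (hall (src b)).
    by move: hchi; rewrite (chi1 hall ha' hc).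
  + apply: (hcon a).
    have H : src a != tgt a by rewrite sa eq_sym.
    apply: (@contractable_of R Q a H (fun b => tgt b == v)).
    * by rewrite /= (negPf ta).
    * by move=> x hx; rewrite (net0 v hx) hsum.
    * by move=> x e _; rewrite /net sa hsum e subrr.
- have hsrc : forall b, src b != v.
    by move=> b; have := congr1 (fun S : {set arr Q} => b \in S) h0; rewrite !inE => ->.
  case: (pickP (fun b => tgt b == v)) => [b hb | hnb].
    apply: (hrem b); apply: removable_of_zero => x hx.
    have := net0 v hx; rewrite [RHS]big_pred0 => [e|b']; last by rewrite (negPf (hsrc b')).
    by apply: (psumr_eq0P _ e) => // i _; case: hx.
  have hall : forall u, u = v.
    apply: isolated hc => y /existsP [b /orP [] /andP [/eqP h1 /eqP h2]].
      by have := hsrc b; rewrite h1 eqxx.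
    by have := hnb b; rewrite /= h2 eqxx.
  by have := hsrc a0; rewrite (hall (src a0)) eqxx.
Qed.

Lemma in_deg (R : realType) (Q : quiver) :
  prime_quiver Q -> 2%:Z <= chi Q -> tight R (fun _ : vert Q => 0%:Z) ->
  forall v, (2 <= #|[set a : arr Q | tgt a == v]|)%N.
Proof.
move=> [hc [har _]] hchi ht v.
have hrem : forall b, ~ removable R (fun _ : vert Q => 0%:Z) b by move=> b; case: (ht b).
have hcon : forall b, ~ contractable R (fun _ : vert Q => 0%:Z) b by move=> b; case: (ht b).
have /card_gt0P [a0 _] := har.
rewrite leqNgt; apply/negP; rewrite ltnS leq_eqVlt ltnS leqn0.
case/orP => [/cards1P [a ha] | /eqP /cards0_eq h0].
- have hs : forall b, (tgt b == v) = (b == a).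
    by move=> b; have := congr1 (fun S : {set arr Q} => b \in S) ha; rewrite !inE.
  have hsum : forall x : arr Q -> R, \sum_(b | tgt b == v) x b = x a.
    by move=> x; rewrite (big_pred1 a) // => b; rewrite /= hs.
  have ta : tgt a = v by apply/eqP; rewrite hs.
  case: (eqVneq (src a) v) => [sa|sa].
  + case: (pickP (fun b => (src b == v) && (b != a))) => [b hb | hnb].
      apply: (hrem b); apply: removable_of_zero => x hx.
      have := net0 v hx; rewrite hsum (bigD1 a) /= ?sa ?eqxx // => e.
      have e2 : \sum_(i | (src i == v) && (i != a)) x i = 0 by lra.
      by apply: (psumr_eq0P _ e2) => // i _; case: hx.
    have hall : forall u, u = v.
      apply: isolated hc => y /existsP [b /orP [] /andP [/eqP h1 /eqP h2]].
        case: (eqVneq b a) => [eb|nb]; first by rewrite -h2 eb.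
        by have := hnb b; rewrite /= h1 eqxx nb.
      by move: h2; move/eqP; rewrite hs => /eqP eb; rewrite -h1 eb.
    have ha' : forall b, b = a by move=> b; apply/eqP; rewrite -hs (hall (tgt b)).
    by move: hchi; rewrite (chi1 hall ha' hc).
  + apply: (hcon a).
    have H : src a != tgt a by rewrite ta.
    apply: (@contractable_of R Q a H (fun b => src b == v)).
    * by rewrite /= (negPf sa).
    * by move=> x hx; rewrite -(net0 v hx) hsum.
    * move=> x e hst.
      have : net x (tgt a) = 0 by rewrite /net ta hsum e subrr.
      by move=> e2; move: hst; rewrite e2 addr0.
- have htgt : forall b, tgt b != v.
    by move=> b; have := congr1 (fun S : {set arr Q} => b \in S) h0; rewrite !inE => ->.
  case: (pickP (fun b => src b == v)) => [b hb | hnb].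
    apply: (hrem b); apply: removable_of_zero => x hx.
    have := net0 v hx; rewrite big_pred0 => [e|b']; last by rewrite (negPf (htgt b')).
    by apply: (psumr_eq0P _ (esym e)) => // i _; case: hx.
  have hall : forall u, u = v.
    apply: isolated hc => y /existsP [b /orP [] /andP [/eqP h1 /eqP h2]].
      by have := hnb b; rewrite /= h1 eqxx.
    by have := htgt b; rewrite h2 eqxx.
  by have := htgt a0; rewrite (hall (tgt a0)) eqxx.
Qed.

Unset Implicit Arguments.

Theorem proposition7p1 (R : realType) (Q : quiver) :
  prime_quiver Q -> 2%:Z <= chi Q ->
  tight R (fun _ : vert Q => 0%:Z) ->
  (forall v : vert Q,
      (2 <= #|[set a : arr Q | src a == v]|)%N /\
      (2 <= #|[set a : arr Q | tgt a == v]|)%N) /\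
  ((#|vert Q|%:Z <= chi Q - 1) /\
   #|arr Q|%:Z = #|vert Q|%:Z + chi Q - 1 /\
   #|arr Q|%:Z <= 2%:Z * (chi Q - 1)).
Proof.
move=> hp hchi ht.
have hdeg : forall v : vert Q,
      (2 <= #|[set a : arr Q | src a == v]|)%N /\
      (2 <= #|[set a : arr Q | tgt a == v]|)%N.
  by move=> v; split; [apply: (out_deg hp hchi ht) | apply: (in_deg hp hchi ht)].
split => //.
have [hc [har _]] := hp.
have /card_gt0P [a0 _] := har.
have hcount : (#|arr Q| = \sum_(v : vert Q) #|[set a | src a == v]|)%N.
  rewrite -sum1_card (partition_big (fun a => src a) xpredT) //=.
  by apply: eq_bigr => v _; rewrite -sum1_card; apply: eq_bigl => a; rewrite !inE.
have h2 : (2 * #|vert Q| <= #|arr Q|)%N.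
  rewrite hcount mulnC -sum_nat_const; apply: leq_sum => v _; exact: (hdeg v).1.
have hchiE : chi Q = #|arr Q|%:Z - #|vert Q|%:Z + 1.
  by rewrite /chi (ncomp1 (src a0) hc).
rewrite hchiE; lia.
Qed.
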